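(* Let $q\ge8$ be even. The $\mathrm{U}\Gamma$-lines (non-tangent unisecants of the twisted cubic $\mathcal{C}$ lying in an osculating plane) form two orbits under $G_q$, of sizes $q+1$ and $q^2-1$, namely $\{\ell_1\varphi:\varphi\in G_q\}$ and $\{\ell_2\varphi:\varphi\in G_q\}$, where $P_0=P(0,0,0,1)$, $\ell_1$ is the line through $P_0$ and $P(0,1,0,0)$, and $\ell_2$ is the line through $P_0$ and $P(0,1,1,0)$. The orbit of size $q+1$ consists of the lines of the regulus complementary to that of the tangents. The subgroup $G_q^{\ell_1}$ of $G_q$ fixing $\ell_1$ has size $q(q-1)$, and each of its elements has a matrix of the form $\begin{pmatrix}1&c&c^2&c^3\\0&d&0&c^2d\\0&0&d^2&cd^2\\0&0&0&d^3\end{pmatrix}$, $c\in\mathbb{F}_q$, $d\in\mathbb{F}_q^*$. The subgroup $G_q^{\ell_2}$ fixing $\ell_2$ has size $q$, and each of its elements has a matrix of the form $\begin{pmatrix}1&c&c^2&c^3\\0&1&0&c^2\\0&0&1&c\\0&0&0&1\end{pmatrix}$, $c\in\mathbb{F}_q$.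
   Context: $\mathrm{PG}(3,q)$ has points $P(x_0,x_1,x_2,x_3)$; $\boldsymbol{\pi}(c_0,c_1,c_2,c_3)$ is the plane $c_0x_0+c_1x_1+c_2x_2+c_3x_3=0$. For $t\in\mathbb{F}_q$ let $P_t=P(t^3,t^2,t,1)$, $P_\infty=P(1,0,0,0)$; the twisted cubic is $\mathcal{C}=\{P_t\}$. The osculating planes are $\pi_{\mathrm{osc}}(t)=\boldsymbol{\pi}(1,-3t,3t^2,-t^3)$ ($t\in\mathbb{F}_q$), $\pi_{\mathrm{osc}}(\infty)=\boldsymbol{\pi}(0,0,0,1)$. The tangent at $P_t$ ($t\in\mathbb{F}_q$) is the line through $P_t$ and $P(3t^2,2t,1,0)$; the tangent at $P_\infty$ is $x_2=x_3=0$. A $\mathrm{U}\Gamma$-line is a line meeting $\mathcal{C}$ in exactly one point, not a tangent, contained in an osculating plane. For $q$ even the $q+1$ tangents form a regulus; the complementary regulus is the opposite family of $q+1$ lines of the same hyperbolic quadric. $G_q$ is the group of projectivities mapping $\mathcal{C}$ to itself; for $q\ge5$ its elements are $x\mapsto xM$ on row vectors, $M=\begin{pmatrix} a^3&a^2c&ac^2&c^3\\ 3a^2b&a^2d+2abc&bc^2+2acd&3c^2d\\ 3ab^2&b^2c+2abd&ad^2+2bcd&3cd^2\\ b^3&b^2d&bd^2&d^3\end{pmatrix}$, $ad-bc\ne0$, up to scalar. *)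

(* Defs.v *)
(* PG(3,q) over a finite field F, points = nonzero row vectors
   'rV[F]_4 up to scalars, lines = 2-dimensional row spaces, represented
   canonically by their generated-space matrix <<_>>%MS : 'M[F]_4. *)
From HB Require Import structures.
From mathcomp Require Import all_boot all_order all_algebra.
Set Implicit Arguments. Unset Strict Implicit. Unset Printing Implicit Defensive.
Import Order.TTheory GRing.Theory Num.Theory.
Local Open Scope ring_scope.

Section PG3.
Variable F : fieldType.

Definition mx4 (rows : seq (seq F)) : 'M[F]_4 :=
  \matrix_(i < 4, j < 4) nth 0 (nth [::] rows i) j.
Definition rv4 (a b c d : F) : 'rV[F]_4 := \row_(j < 4) nth 0 [:: a; b; c; d] j.

(* the matrix M of the projectivity x |-> xM of G_q associated with (a,b,c,d) *)
Definition GqMx (a b c d : F) : 'M[F]_4 :=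
  mx4 [:: [:: a ^+ 3; a ^+ 2 * c; a * c ^+ 2; c ^+ 3];
          [:: 3%:R * a ^+ 2 * b; a ^+ 2 * d + 2%:R * a * b * c;
              b * c ^+ 2 + 2%:R * a * c * d; 3%:R * c ^+ 2 * d];
          [:: 3%:R * a * b ^+ 2; b ^+ 2 * c + 2%:R * a * b * d;
              a * d ^+ 2 + 2%:R * b * c * d; 3%:R * c * d ^+ 2];
          [:: b ^+ 3; b ^+ 2 * d; b * d ^+ 2; d ^+ 3]].

Definition stabMx (c d : F) : 'M[F]_4 :=
  mx4 [:: [:: 1; c; c ^+ 2; c ^+ 3];
          [:: 0; d; 0; c ^+ 2 * d];
          [:: 0; 0; d ^+ 2; c * d ^+ 2];
          [:: 0; 0; 0; d ^+ 3]].

(* points of the twisted cubic: Some t = P_t, None = P_infinity *)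
Definition Cpt (o : option F) : 'rV[F]_4 :=
  match o with
  | Some t => rv4 (t ^+ 3) (t ^+ 2) t 1
  | None => rv4 1 0 0 0
  end.

Definition line_through (u v : 'rV[F]_4) : 'M[F]_4 := <<col_mx u v>>%MS.

Definition is_line (U : 'M[F]_4) : bool := (\rank U == 2)%N && (<<U>>%MS == U).

Definition on_line (u : 'rV[F]_4) (U : 'M[F]_4) : bool := (u <= U)%MS.

Definition lines_meet (U V : 'M[F]_4) : bool := (U :&: V)%MS != 0.

Definition tangent (o : option F) : 'M[F]_4 :=
  match o with
  | Some t => line_through (Cpt (Some t)) (rv4 (3%:R * t ^+ 2) (2%:R * t) 1 0)
  | None => line_through (rv4 1 0 0 0) (rv4 0 1 0 0)
  end.

(* coefficient vector (c0,c1,c2,c3) of the osculating plane *)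
Definition osc (o : option F) : 'rV[F]_4 :=
  match o with
  | Some t => rv4 1 (- (3%:R * t)) (3%:R * t ^+ 2) (- t ^+ 3)
  | None => rv4 0 0 0 1
  end.

Definition in_plane (U : 'M[F]_4) (c : 'rV[F]_4) : bool := U *m c^T == 0.

Definition line_image (U M : 'M[F]_4) : 'M[F]_4 := <<U *m M>>%MS.

End PG3.

Section Finite.
Variable F : finFieldType.

Definition is_UGamma (U : 'M[F]_4) : bool :=
  [&& is_line U,
      #|[set o : option F | on_line (Cpt o) U]| == 1%N,
      [forall o : option F, U != tangent o] &
      [exists o : option F, in_plane U (osc o)]].

Definition UGamma_lines : {set 'M[F]_4} := [set U | is_UGamma U].

(* the lines of the regulus complementary to the tangents: the transversals
   of the tangent regulus (lines meeting every tangent) *)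
Definition compl_regulus : {set 'M[F]_4} :=
  [set U | is_line U && [forall o : option F, lines_meet U (tangent o)]].

Definition Gq_mx : {set 'M[F]_4} :=
  [set M | [exists a : F, exists b : F, exists c : F, exists d : F,
             (a * d - b * c != 0) && (M == GqMx a b c d)]].

(* a projectivity = class of matrices up to nonzero scalars *)
Definition projclass (M : 'M[F]_4) : {set 'M[F]_4} :=
  [set k *: M | k : F & k != 0].

Definition Gq : {set {set 'M[F]_4}} := [set projclass M | M in Gq_mx].

Definition line_orbit (U : 'M[F]_4) : {set 'M[F]_4} :=
  [set line_image U M | M in Gq_mx].

Definition line_stab (U : 'M[F]_4) : {set {set 'M[F]_4}} :=
  [set g in Gq | [forall M in g, line_image U M == U]].

End Finite.

(* Main.v *)
Require Import Defs.
From HB Require Import structures.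
From mathcomp Require Import all_boot all_order all_algebra.
From mathcomp Require Import fingroup pgroup abelian finfield.
From mathcomp Require Import ring zify.
Import GRing.Theory.
Local Open Scope ring_scope.
Set Implicit Arguments. Unset Strict Implicit. Unset Printing Implicit Defensive.

Lemma char2_of (F : finFieldType) : ~~ odd #|F| -> (2%:R : F) = 0.
Proof.
move=> ev.
have /is_abelemP [p pp ab] := finField_is_abelem F.
have pg := abelem_pgroup ab.
have cF := card_pgroup pg; rewrite cardsT in cF.
have pch := card_finPcharP cF pp.
have p2 : p = 2%N.
  case: (even_prime pp) => // op.
  by move: ev; rewrite cF oddX op orbT.
by rewrite p2 in pch; apply/eqP; rewrite (pcharf0 pch).
Qed.

Notation i0 := (@Ordinal 4 0 erefl).
Notation i1 := (@Ordinal 4 1 erefl).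
Notation i2 := (@Ordinal 4 2 erefl).
Notation i3 := (@Ordinal 4 3 erefl).

Lemma rv4E (F : fieldType) (a b c d : F) (j : 'I_4) :
  rv4 a b c d 0 j = nth 0 [:: a; b; c; d] j.
Proof. by rewrite /rv4 mxE. Qed.

Lemma rv4_eq (F : fieldType) (a b c d a' b' c' d' : F) :
  a = a' -> b = b' -> c = c' -> d = d' -> rv4 a b c d = rv4 a' b' c' d'.
Proof. by move=> -> -> -> ->. Qed.

Lemma rv4_eqE (F : fieldType) (a b c d a' b' c' d' : F) :
  rv4 a b c d = rv4 a' b' c' d' -> [/\ a = a', b = b', c = c' & d = d'].
Proof.
move=> e; have E j : rv4 a b c d 0 j = rv4 a' b' c' d' 0 j by rewrite e.
by move: (E i0) (E i1) (E i2) (E i3); rewrite !rv4E /=.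
Qed.

Lemma rv4_eta (F : fieldType) (w : 'rV[F]_4) :
  w = rv4 (w 0 i0) (w 0 i1) (w 0 i2) (w 0 i3).
Proof.
apply/rowP => j; rewrite rv4E.
case: j => [[|[|[|[|j]]]] Hj] //=; congr (w _ _); exact: val_inj.
Qed.

Lemma rv4_comb (F : fieldType) (x y : F) (a b c d a' b' c' d' : F) :
  x *: rv4 a b c d + y *: rv4 a' b' c' d' =
  rv4 (x * a + y * a') (x * b + y * b') (x * c + y * c') (x * d + y * d').
Proof.
by apply/rowP => j; rewrite !mxE; case: j => [[|[|[|[|j]]]] Hj].
Qed.

Lemma rv4_scale (F : fieldType) (x : F) (a b c d : F) :
  x *: rv4 a b c d = rv4 (x * a) (x * b) (x * c) (x * d).
Proof.
by apply/rowP => j; rewrite !mxE; case: j => [[|[|[|[|j]]]] Hj].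
Qed.

Lemma rv4_neq0 (F : fieldType) (a b c d : F) :
  (a != 0) || (b != 0) || (c != 0) || (d != 0) -> rv4 a b c d != 0.
Proof.
move=> h; apply/eqP => e.
have E j : rv4 a b c d 0 j = (0 : 'rV[F]_4) 0 j by rewrite e.
move: (E i0) (E i1) (E i2) (E i3); rewrite !rv4E !mxE /= => h0 h1 h2 h3.
by move: h; rewrite h0 h1 h2 h3 eqxx.
Qed.

Lemma sum4 (F : fieldType) (f : 'I_4 -> F) :
  \sum_(k < 4) f k = f i0 + f i1 + f i2 + f i3.
Proof.
rewrite !big_ord_recr big_ord0 /= add0r.
by congr (_ + _ + _ + _); congr f; apply: val_inj.
Qed.

Lemma mul_rv4 (F : fieldType) (x0 x1 x2 x3 : F) (M : 'M[F]_4) :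
  rv4 x0 x1 x2 x3 *m M =
  rv4 (x0 * M i0 i0 + x1 * M i1 i0 + x2 * M i2 i0 + x3 * M i3 i0)
      (x0 * M i0 i1 + x1 * M i1 i1 + x2 * M i2 i1 + x3 * M i3 i1)
      (x0 * M i0 i2 + x1 * M i1 i2 + x2 * M i2 i2 + x3 * M i3 i2)
      (x0 * M i0 i3 + x1 * M i1 i3 + x2 * M i2 i3 + x3 * M i3 i3).
Proof.
apply/rowP => j; rewrite [LHS]mxE sum4 !rv4E /=.
case: j => [[|[|[|[|j]]]] Hj] //=; congr (_ + _ + _ + _); congr (_ * M _ _);
  exact: val_inj.
Qed.

Lemma dot_rv4 (F : fieldType) (x0 x1 x2 x3 y0 y1 y2 y3 : F) :
  (rv4 x0 x1 x2 x3 *m (rv4 y0 y1 y2 y3)^T == 0) =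
  (x0 * y0 + x1 * y1 + x2 * y2 + x3 * y3 == 0).
Proof.
apply/eqP/eqP => [e | e].
  have := congr1 (fun M : 'M[F]_1 => M 0 0) e.
  by rewrite !mxE sum4 !mxE /=.
apply/matrixP => i j; rewrite !ord1 !mxE sum4 !mxE /=.
exact: e.
Qed.

Lemma sub_lt_l (F : fieldType) (u v : 'rV[F]_4) : (u <= line_through u v)%MS.
Proof.
by rewrite /line_through genmxE; have := submx_refl (col_mx u v);
  rewrite col_mx_sub => /andP[].
Qed.

Lemma sub_lt_r (F : fieldType) (u v : 'rV[F]_4) : (v <= line_through u v)%MS.
Proof.
by rewrite /line_through genmxE; have := submx_refl (col_mx u v);
  rewrite col_mx_sub => /andP[].
Qed.

Lemma comb_sub (F : fieldType) m (A : 'M[F]_(m, 4)) (u v : 'rV[F]_4) x y :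
  (u <= A)%MS -> (v <= A)%MS -> ((x *: u + y *: v)%R <= A)%MS.
Proof. by move=> hu hv; apply: addmx_sub; apply: scalemx_sub. Qed.

Lemma lt_sub (F : fieldType) m (A : 'M[F]_(m, 4)) (u v : 'rV[F]_4) :
  (line_through u v <= A)%MS = (u <= A)%MS && (v <= A)%MS.
Proof. by rewrite /line_through genmxE col_mx_sub. Qed.

Lemma sub_ltP (F : fieldType) (u v w : 'rV[F]_4) :
  (w <= line_through u v)%MS -> exists x y, w = x *: u + y *: v.
Proof.
rewrite /line_through genmxE => /submxP [D ->].
rewrite -[D]hsubmxK mul_row_col (mx11_scalar (lsubmx D)) (mx11_scalar (rsubmx D)).
by rewrite !mul_scalar_mx; eexists; eexists.
Qed.

Lemma lt_eq (F : fieldType) (u v u' v' : 'rV[F]_4) :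
  (u' <= line_through u v)%MS -> (v' <= line_through u v)%MS ->
  (u <= line_through u' v')%MS -> (v <= line_through u' v')%MS ->
  line_through u' v' = line_through u v.
Proof.
rewrite /line_through !genmxE => h1 h2 h3 h4.
by apply/genmxP/andP; rewrite !col_mx_sub h1 h2 h3 h4.
Qed.

Lemma lt_chg (F : fieldType) (u v u' v' : 'rV[F]_4) (a b c d : F) :
  u' = a *: u + b *: v -> v' = c *: u + d *: v -> a * d - b * c != 0 ->
  line_through u' v' = line_through u v.
Proof.
move=> hu hv hD; apply: lt_eq.
- by rewrite hu; apply: comb_sub; [apply: sub_lt_l | apply: sub_lt_r].
- by rewrite hv; apply: comb_sub; [apply: sub_lt_l | apply: sub_lt_r].
- have -> : u = (d / (a * d - b * c)) *: u' + (- b / (a * d - b * c)) *: v'.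
    by apply/rowP => j; rewrite hu hv !mxE; field.
  by apply: comb_sub; [apply: sub_lt_l | apply: sub_lt_r].
- have -> : v = (- c / (a * d - b * c)) *: u' + (a / (a * d - b * c)) *: v'.
    by apply/rowP => j; rewrite hu hv !mxE; field.
  by apply: comb_sub; [apply: sub_lt_l | apply: sub_lt_r].
Qed.

Lemma line_image_lt (F : fieldType) (u v : 'rV[F]_4) (M : 'M[F]_4) :
  line_image (line_through u v) M = line_through (u *m M) (v *m M).
Proof.
rewrite /line_image /line_through -mul_col_mx.
by apply: eq_genmx; apply: eqmxMr; apply: genmxE.
Qed.

Lemma rank_lt (F : fieldType) (u v : 'rV[F]_4) :
  u != 0 -> ~~ (v <= u)%MS -> \rank (line_through u v) = 2%N.
Proof.
move=> hu hv; rewrite /line_through genmxE -addsmxE.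
have [le _] := mxrank_leqif_sup (addsmxSl u v).
have lt1 : (\rank u < \rank (u + v)%MS)%N.
  rewrite ltn_neqAle le andbT.
  by rewrite (mxrank_leqif_sup (addsmxSl u v)) addsmx_sub submx_refl.
have r2 : (\rank (u + v)%MS <= 2)%N.
  by rewrite addsmxE; apply: rank_leq_row.
move: lt1; rewrite rank_rV hu => lt1.
by apply/eqP; rewrite eqn_leq r2 lt1.
Qed.

Lemma is_line_lt (F : fieldType) (u v : 'rV[F]_4) :
  u != 0 -> ~~ (v <= u)%MS -> is_line (line_through u v).
Proof.
move=> hu hv; rewrite /is_line rank_lt // eqxx /=.
by rewrite /line_through genmx_id.
Qed.

Lemma line_eq_of_sub (F : fieldType) (U : 'M[F]_4) (u v : 'rV[F]_4) :
  is_line U -> \rank (line_through u v) = 2%N ->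
  (line_through u v <= U)%MS -> U = line_through u v.
Proof.
case/andP => /eqP rU /eqP gU r2 h.
case: (mxrank_leqif_eq h) => _ e.
have : (line_through u v == U)%MS by rewrite -e rU r2.
move/genmxP; rewrite gU /line_through genmx_id => <-.
by [].
Qed.

Lemma line_eq_of_sub' (F : fieldType) (U : 'M[F]_4) (u v : 'rV[F]_4) :
  is_line U -> (U <= line_through u v)%MS -> U = line_through u v.
Proof.
case/andP => /eqP rU /eqP gU h.
case: (mxrank_leqif_eq h) => _ e.
have r2 : (\rank (line_through u v) <= 2)%N.
  by rewrite /line_through genmxE; apply: rank_leq_row.
have : (U == line_through u v)%MS.
  rewrite -e; apply/eqP; apply: anti_leq; rewrite (mxrankS h) /=.
  exact: leq_trans r2 (eq_leq (esym rU)).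
by move/genmxP; rewrite gU /line_through genmx_id.
Qed.

Lemma meet_of (F : fieldType) (U V : 'M[F]_4) (w : 'rV[F]_4) :
  w != 0 -> (w <= U)%MS -> (w <= V)%MS -> lines_meet U V.
Proof.
move=> hw hU hV; rewrite /lines_meet; apply: contra hw => /eqP e.
have : (w <= U :&: V)%MS by rewrite sub_capmx hU hV.
by rewrite e submx0.
Qed.

Lemma meetP (F : fieldType) (U V : 'M[F]_4) :
  lines_meet U V -> exists w : 'rV[F]_4, [/\ w != 0, (w <= U)%MS & (w <= V)%MS].
Proof.
rewrite /lines_meet => hX.
have [i hi] : exists i, row i (U :&: V)%MS != 0.
  apply/existsP; apply: contraR hX => /existsPn h.
  apply/eqP/row_matrixP => i; rewrite row0; apply/eqP.
  by move: (h i); rewrite negbK.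
exists (row i (U :&: V)%MS); split => //.
  exact: submx_trans (row_sub _ _) (capmxSl _ _).
exact: submx_trans (row_sub _ _) (capmxSr _ _).
Qed.

Ltac vsolve := apply/rowP; case => [[|[|[|[|?]]]] ?]; rewrite !mxE //=; rewrite ?nth_nil //.

Definition Tv (F : fieldType) (o : option F) : 'rV[F]_4 :=
  match o with
  | Some t => rv4 (3%:R * t ^+ 2) (2%:R * t) 1 0
  | None => rv4 0 1 0 0
  end.
Definition Sv (F : fieldType) (o : option F) : 'rV[F]_4 :=
  match o with
  | Some t => rv4 (3%:R * t) 1 0 0
  | None => rv4 0 0 1 0
  end.
Definition Lpt (F : fieldType) (o : option F) (v : F) : 'rV[F]_4 := Sv o + v *: Tv o.
Definition Lline (F : fieldType) (o : option F) (v : F) : 'M[F]_4 :=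
  line_through (Cpt o) (Lpt o v).

Lemma tangentE (F : fieldType) (o : option F) : tangent o = line_through (Cpt o) (Tv o).
Proof. by case: o. Qed.

Lemma eq_from_sub (F : fieldType) (x y z : F) : z = 0 -> x - y = z -> x = y.
Proof. by move=> -> /eqP; rewrite subr_eq0 => /eqP. Qed.

Lemma Cpt_osc (F : fieldType) (o o' : option F) :
  Cpt o' *m (osc o)^T == 0 -> o' = o.
Proof.
case: o' => [s|]; case: o => [t|] /=; rewrite dot_rv4.
- move=> /eqP h; have : (s - t) ^+ 3 = 0 by rewrite -h; ring.
  by move/eqP; rewrite expf_eq0 /= subr_eq0 => /eqP ->.
- by rewrite !mulr0 !add0r mulr1 oner_eq0.
- by rewrite !mul0r !addr0 mulr1 oner_eq0.
- by [].
Qed.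

Lemma Cpt_neq0 (F : fieldType) (o : option F) : Cpt o != 0.
Proof. by case: o => [t|] /=; apply: rv4_neq0; rewrite oner_eq0 ?orbT. Qed.

Lemma osc_P (F : fieldType) (o : option F) : Cpt o *m (osc o)^T == 0.
Proof. by case: o => [t|] /=; rewrite dot_rv4 //; apply/eqP; ring. Qed.
Lemma osc_T (F : fieldType) (o : option F) : Tv o *m (osc o)^T == 0.
Proof. by case: o => [t|] /=; rewrite dot_rv4 //; apply/eqP; ring. Qed.
Lemma osc_S (F : fieldType) (o : option F) : Sv o *m (osc o)^T == 0.
Proof. by case: o => [t|] /=; rewrite dot_rv4 //; apply/eqP; ring. Qed.
Lemma osc_L (F : fieldType) (o : option F) v : Lpt o v *m (osc o)^T == 0.
Proof.
by rewrite /Lpt mulmxDl -scalemxAl (eqP (osc_S o)) (eqP (osc_T o)) scaler0 addr0.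
Qed.

Lemma in_planeE (F : fieldType) (U : 'M[F]_4) (c : 'rV[F]_4) :
  in_plane U c = (U <= kermx c^T)%MS.
Proof. by rewrite /in_plane sub_kermx. Qed.

Lemma Lline_plane (F : fieldType) (o : option F) v : in_plane (Lline o v) (osc o).
Proof. by rewrite in_planeE lt_sub !sub_kermx osc_P osc_L. Qed.

Lemma tangent_plane (F : fieldType) (o : option F) : in_plane (tangent o) (osc o).
Proof. by rewrite tangentE in_planeE lt_sub !sub_kermx osc_P osc_T. Qed.

Lemma plane_vec (F : fieldType) (U : 'M[F]_4) (c x : 'rV[F]_4) :
  in_plane U c -> (x <= U)%MS -> x *m c^T == 0.
Proof. by rewrite in_planeE -sub_kermx => h1 h2; exact: submx_trans h2 h1. Qed.

Lemma on_plane_pt (F : fieldType) (U : 'M[F]_4) (o o' : option F) :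
  in_plane U (osc o) -> (Cpt o' <= U)%MS -> o' = o.
Proof. by move=> h1 h2; apply: Cpt_osc; exact: plane_vec h1 h2. Qed.

Definition ca (F : fieldType) (o : option F) (x : 'rV[F]_4) : F :=
  match o with Some t => x 0 i3 | None => x 0 i0 end.
Definition cb (F : fieldType) (o : option F) (x : 'rV[F]_4) : F :=
  match o with Some t => x 0 i2 - x 0 i3 * t | None => x 0 i1 end.
Definition cc (F : fieldType) (o : option F) (x : 'rV[F]_4) : F :=
  match o with
  | Some t => x 0 i1 - 2%:R * t * x 0 i2 + x 0 i3 * t ^+ 2
  | None => x 0 i2 end.

Lemma decompE (F : fieldType) (o : option F) (x : 'rV[F]_4) :
  x *m (osc o)^T == 0 ->
  x = ca o x *: Cpt o + cb o x *: Tv o + cc o x *: Sv o.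
Proof.
rewrite [in LHS](rv4_eta x) [in X in X *m _](rv4_eta x).
case: o => [t|] /=; rewrite dot_rv4 => /eqP h.
- have hx0 : x 0 i0 = 3%:R * t * x 0 i1 - 3%:R * t ^+ 2 * x 0 i2 + t ^+ 3 * x 0 i3.
    by apply: (eq_from_sub h); ring.
  rewrite hx0; vsolve; ring.
- have hx3 : x 0 i3 = 0 by rewrite -h; ring.
  rewrite hx3; vsolve; ring.
Qed.

Lemma Lpt_notP (F : fieldType) (o : option F) v : ~~ (Lpt o v <= Cpt o)%MS.
Proof.
apply/negP => /sub_rVP [k hk].
have E j : Lpt o v 0 j = (k *: Cpt o) 0 j by rewrite hk.
case: o {hk} E => [t|] E.
- move: (E i3) (E i2) (E i1); rewrite /Lpt /= !mxE /=.
  rewrite !(mulr0, mulr1, addr0, add0r) => k0; rewrite -k0 mul0r => ->.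
  by rewrite !mul0r addr0 => /eqP; rewrite oner_eq0.
- move: (E i2); rewrite /Lpt /= !mxE /=.
  by rewrite ?(mulr0, mulr1, addr0, add0r, mul0r) => /eqP; rewrite ?oner_eq0.
Qed.

Lemma Tv_notP (F : fieldType) (o : option F) : ~~ (Tv o <= Cpt o)%MS.
Proof.
apply/negP => /sub_rVP [k hk].
have E j : Tv o 0 j = (k *: Cpt o) 0 j by rewrite hk.
case: o {hk} E => [t|] E.
- move: (E i3) (E i2); rewrite /= !mxE /=.
  by rewrite !(mulr0, mulr1, addr0, add0r) => <-; rewrite mul0r => /eqP; rewrite oner_eq0.
- move: (E i1); rewrite /= !mxE /=.
  by rewrite !(mulr0, mulr1, addr0, add0r) => /eqP; rewrite oner_eq0.
Qed.

Lemma rank_Lline (F : fieldType) (o : option F) v : \rank (Lline o v) = 2%N.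
Proof. by apply: rank_lt; [apply: Cpt_neq0 | apply: Lpt_notP]. Qed.

Lemma rank_tangent (F : fieldType) (o : option F) : \rank (tangent o) = 2%N.
Proof. by rewrite tangentE; apply: rank_lt; [apply: Cpt_neq0 | apply: Tv_notP]. Qed.

Lemma is_line_Lline (F : fieldType) (o : option F) v : is_line (Lline o v).
Proof. by apply: is_line_lt; [apply: Cpt_neq0 | apply: Lpt_notP]. Qed.

Lemma Lline_pt (F : fieldType) (o o' : option F) v :
  (Cpt o' <= Lline o v)%MS = (o' == o).
Proof.
apply/idP/eqP => [h | ->]; last exact: sub_lt_l.
exact: on_plane_pt (Lline_plane o v) h.
Qed.

Lemma Tv_notL (F : fieldType) (o : option F) v : ~~ (Tv o <= Lline o v)%MS.
Proof.
apply/negP => /sub_ltP [x [y hxy]].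
have E j : Tv o 0 j = (x *: Cpt o + y *: Lpt o v) 0 j by rewrite hxy.
case: o {hxy} E => [t|] E.
- move: (E i3) (E i2) (E i1); rewrite /Lpt /= !mxE /=.
  rewrite !(mulr0, mulr1, addr0, add0r) => x0; rewrite -x0 !mul0r !add0r.
  move=> h1 h2; have y0 : y = 0.
    have -> : y = y * (1 + v * (2%:R * t)) - (y * v) * (2%:R * t) by ring.
    by rewrite -h2 -h1 mul1r subrr.
  by move: h1; rewrite y0 mul0r => /eqP; rewrite oner_eq0.
- move: (E i2) (E i1); rewrite /Lpt /= !mxE /=.
  rewrite !(mulr0, mulr1, addr0, add0r, mul0r) => <-.
  by rewrite mul0r => /eqP; rewrite oner_eq0.
Qed.

Lemma Lpt_inj (F : fieldType) (o : option F) v v' :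
  (Lpt o v' <= Lline o v)%MS -> v' = v.
Proof.
move=> /sub_ltP [x [y hxy]].
have E j : Lpt o v' 0 j = (x *: Cpt o + y *: Lpt o v) 0 j by rewrite hxy.
case: o {hxy} E => [t|] E.
- move: (E i3) (E i2) (E i1); rewrite /Lpt /= !mxE /=.
  rewrite !(mulr0, mulr1, addr0, add0r) => x0; rewrite -x0 !mul0r !add0r.
  move=> h2 h1; have y1 : y = 1.
    have -> : y = y * (1 + v * (2%:R * t)) - (y * v) * (2%:R * t) by ring.
    by rewrite -h1 -h2; ring.
  by rewrite h2 y1 mul1r.
- move: (E i2) (E i1); rewrite /Lpt /= !mxE /=.
  rewrite !(mulr0, mulr1, addr0, add0r, mul0r) => <-.
  by rewrite mul1r.
Qed.

Lemma Lline_inj (F : fieldType) (o o' : option F) v v' :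
  Lline o v = Lline o' v' -> o = o' /\ v = v'.
Proof.
move=> e.
have oo : o' = o by apply/eqP; rewrite -(Lline_pt o o' v) e sub_lt_l.
move: e; rewrite oo => e; split => //; symmetry; apply: (@Lpt_inj _ o); rewrite e; exact: sub_lt_r.
Qed.

Lemma Lline_not_tangent (F : fieldType) (o o' : option F) v : Lline o v != tangent o'.
Proof.
apply/eqP => e.
have oo : o' = o by apply/eqP; rewrite -(Lline_pt o o' v) e tangentE sub_lt_l.
subst o'; have := Tv_notL o v; rewrite e tangentE sub_lt_r.
by [].
Qed.

Lemma classify (F : fieldType) (o : option F) (U : 'M[F]_4) :
  is_line U -> (Cpt o <= U)%MS -> in_plane U (osc o) -> U != tangent o ->
  exists v, U = Lline o v.
Proof.
move=> hU hP hpl hT.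
have hrow i : row i U *m (osc o)^T == 0.
  by apply: plane_vec hpl _; exact: row_sub.
case: (boolP [exists i, cc o (row i U) != 0]) => [/existsP [i hi] | /existsPn hall].
- have hr := decompE (hrow i); have hri : (row i U <= U)%MS by exact: row_sub.
  move: hi hr hri; set r := row i U; set a := ca o r; set b := cb o r; set c := cc o r.
  clearbody a b c => hi hr hri.
  exists (b / c).
  apply: line_eq_of_sub => //; first exact: rank_Lline.
  rewrite lt_sub hP /=.
  have -> : Lpt o (b / c) = c^-1 *: r + (- (c^-1 * a)) *: Cpt o.
    rewrite hr /Lpt; apply/rowP => j; rewrite !mxE; field => //.
  by apply: comb_sub => //; exact: row_sub.
- exfalso; move/eqP: hT; apply; rewrite tangentE; apply: line_eq_of_sub' => //.
  apply/row_subP => i.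
  have := decompE (hrow i); move: (hall i); rewrite negbK => /eqP ->.
  rewrite scale0r addr0 => ->.
  by apply: comb_sub; [exact: sub_lt_l | exact: sub_lt_r].
Qed.


Lemma UG_iff (F : finFieldType) (U : 'M[F]_4) :
  is_UGamma U <-> exists o v, U = Lline o v.
Proof.
split.
- case/and4P => hl /cards1P [o' ho'] /forallP hT /existsP [o hpl].
  have hon : (Cpt o' <= U)%MS.
    have : o' \in [set o' | on_line (Cpt o') U] by rewrite ho' set11.
    by rewrite inE.
  have oo := on_plane_pt hpl hon; subst o'.
  have [v hv] := classify hl hon hpl (hT o).
  by exists o, v.
- case=> o [v ->]; apply/and4P; split.
  + exact: is_line_Lline.
  + apply/cards1P; exists o; apply/setP => o'.
    by rewrite !inE /on_line Lline_pt.
  + by apply/forallP => o'; apply: Lline_not_tangent.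
  + by apply/existsP; exists o; apply: Lline_plane.
Qed.

Lemma n3 (F : fieldType) (h2 : 2%:R = 0 :> F) : 3%:R = 1 :> F.
Proof. by rewrite -[3%N]/(2 + 1)%N natrD h2 add0r. Qed.

Lemma c2_eq (F : fieldType) (h2 : 2%:R = 0 :> F) (x y z : F) :
  x - y = 2%:R * z -> x = y.
Proof. by rewrite h2 mul0r => /eqP; rewrite subr_eq0 => /eqP. Qed.

Lemma Sv_c2 (F : fieldType) (h2 : 2%:R = 0 :> F) (t : F) : Sv (Some t) = rv4 t 1 0 0.
Proof. by rewrite /= (n3 h2) mul1r. Qed.

Lemma Tv_c2 (F : fieldType) (h2 : 2%:R = 0 :> F) (t : F) : Tv (Some t) = rv4 (t ^+ 2) 0 1 0.
Proof. by rewrite /= (n3 h2) h2 !mul1r mul0r. Qed.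

Lemma Lpt0 (F : fieldType) (o : option F) : Lpt o 0 = Sv o.
Proof. by rewrite /Lpt scale0r addr0. Qed.

Lemma Cpt0 (F : fieldType) : Cpt (Some (0 : F)) = rv4 0 0 0 1.
Proof. by apply: rv4_eq; rewrite ?expr0n. Qed.

Lemma rv4_0 (F : fieldType) : rv4 0 0 0 0 = 0 :> 'rV[F]_4.
Proof. by apply/rowP => j; rewrite !mxE; case: j => [[|[|[|[|j]]]] Hj]. Qed.

Ltac simp0 := rewrite ?(mulr0, mul0r, mulr1, mul1r, addr0, add0r, subr0, sub0r, oppr0).

Lemma compl_iff (F : finFieldType) (h2 : 2%:R = 0 :> F) (U : 'M[F]_4) :
  (is_line U && [forall o : option F, lines_meet U (tangent o)]) <->
  exists o, U = Lline o 0.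
Proof.
split.
- case/andP => hl /forallP hm.
  have [p [p0 pU pT]] := meetP (hm None).
  have [r [r0 rU rT]] := meetP (hm (Some 0)).
  have [s [s0 sU sT]] := meetP (hm (Some 1)).
  move: pT => /sub_ltP [x [y]]; rewrite rv4_comb; simp0 => ep.
  move: rT; rewrite tangentE Cpt0 /= => /sub_ltP [y' [x']]; rewrite rv4_comb.
  rewrite ?expr0n /=; simp0 => er.
  move: sT; rewrite tangentE /= (n3 h2) h2 => /sub_ltP [al [be]]; rewrite rv4_comb.
  rewrite ?expr1n; simp0 => es.
  subst p r s.
  have rnp : ~~ (rv4 0 0 x' y' <= rv4 x y 0 0)%MS.
    apply/negP => /sub_rVP [k]; rewrite rv4_scale; simp0.
    case/rv4_eqE => _ _ e1 e2; move: r0; rewrite e1 e2.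
    by rewrite rv4_0 eqxx.
  have hU : U = line_through (rv4 x y 0 0) (rv4 0 0 x' y').
    by apply: line_eq_of_sub hl (rank_lt p0 rnp) _; rewrite lt_sub pU rU.
  move: sU; rewrite hU => /sub_ltP [mu [nu]]; rewrite rv4_comb; simp0.
  case/rv4_eqE => e0 e1 e2 e3.
  have mu0 : mu != 0.
    apply: contra s0 => /eqP mu0; rewrite e0 e1 mu0 !mul0r; simp0.
    by rewrite rv4_0.
  have nu0 : nu != 0.
    apply: contra s0 => /eqP nu0; rewrite e2 e3 nu0 !mul0r; simp0.
    by rewrite rv4_0.
  set k := mu / nu.
  have k0 : k != 0 by rewrite mulf_neq0 ?invr_neq0.
  have hx' : x' = k * x by apply: (mulfI nu0); rewrite -e2 e0 /k; field.
  have hy' : y' = k * y by apply: (mulfI nu0); rewrite -e3 e1 /k; field.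
  rewrite hx' hy'.
  case: (eqVneq y 0) => [y0 | y0].
  + exists None; rewrite /Lline Lpt0 /=.
    have x0 : x != 0 by apply: contra p0 => /eqP ->; rewrite y0 rv4_0.
    apply: (@lt_chg _ _ _ _ _ x 0 0 (k * x)).
    * by rewrite rv4_comb y0; apply: rv4_eq; simp0.
    * by rewrite rv4_comb y0; apply: rv4_eq; simp0.
    * by rewrite mulr0 subr0 mulf_neq0 // mulf_neq0.
  + exists (Some (x / y)); rewrite /Lline Lpt0 (Sv_c2 h2).
    apply: (@lt_chg _ _ _ _ _ 0 y (k * y) (- (k * y) * (x / y) ^+ 2)).
    * by rewrite rv4_comb; apply: rv4_eq; field.
    * by rewrite rv4_comb; apply: rv4_eq; field.
    * rewrite mul0r sub0r oppr_eq0; apply: mulf_neq0 => //.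
      exact: mulf_neq0.
- case=> o ->; apply/andP; split; first exact: is_line_Lline.
  apply/forallP => o'; rewrite /Lline Lpt0 tangentE.
  case: o => [t|]; case: o' => [s|].
  + apply: (@meet_of _ _ _ (rv4 (s ^+ 2 * t) (s ^+ 2) t 1)).
    * by apply: rv4_neq0; rewrite oner_eq0 !orbT.
    * have -> : rv4 (s ^+ 2 * t) (s ^+ 2) t 1 =
                1 *: Cpt (Some t) + (s ^+ 2 - t ^+ 2) *: Sv (Some t).
        by rewrite (Sv_c2 h2) /= rv4_comb; apply: rv4_eq; ring.
      by apply: comb_sub; [exact: sub_lt_l | exact: sub_lt_r].
    * have -> : rv4 (s ^+ 2 * t) (s ^+ 2) t 1 =
                1 *: Cpt (Some s) + (t - s) *: Tv (Some s).
        by rewrite (Tv_c2 h2) /= rv4_comb; apply: rv4_eq; ring.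
      by apply: comb_sub; [exact: sub_lt_l | exact: sub_lt_r].
  + apply: (@meet_of _ _ _ (Sv (Some t))).
    * by rewrite (Sv_c2 h2); apply: rv4_neq0; rewrite oner_eq0 !orbT.
    * exact: sub_lt_r.
    * have -> : Sv (Some t) = t *: Cpt None + 1 *: Tv None.
        by rewrite (Sv_c2 h2) /= rv4_comb; apply: rv4_eq; ring.
      by apply: comb_sub; [exact: sub_lt_l | exact: sub_lt_r].
  + apply: (@meet_of _ _ _ (Tv (Some s))).
    * by rewrite (Tv_c2 h2); apply: rv4_neq0; rewrite oner_eq0 !orbT.
    * have -> : Tv (Some s) = s ^+ 2 *: Cpt None + 1 *: Sv None.
        by rewrite (Tv_c2 h2) /= rv4_comb; apply: rv4_eq; ring.
      by apply: comb_sub; [exact: sub_lt_l | exact: sub_lt_r].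
    * exact: sub_lt_r.
  + apply: (@meet_of _ _ _ (Cpt None)); last exact: sub_lt_l; last exact: sub_lt_l.
    exact: Cpt_neq0.
Qed.


Lemma LptS (F : fieldType) (t w : F) :
  Lpt (Some t) w = rv4 (3%:R * t + w * (3%:R * t ^+ 2)) (1 + w * (2%:R * t)) w 0.
Proof. by rewrite /Lpt /=; vsolve; ring. Qed.

Lemma LptN (F : fieldType) (w : F) : Lpt None w = rv4 0 w 1 0.
Proof. by rewrite /Lpt /=; vsolve; ring. Qed.

Lemma Lpt0v (F : fieldType) (v : F) : Lpt (Some 0) v = rv4 0 1 v 0.
Proof. by rewrite LptS; apply: rv4_eq; ring. Qed.

Lemma img_vecs (F : fieldType) (v a b c d : F) :
  line_image (Lline (Some 0) v) (GqMx a b c d) = line_through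
   (rv4 (b ^+ 3) (b ^+ 2 * d) (b * d ^+ 2) (d ^+ 3))
   (rv4 (3%:R * a ^+ 2 * b + v * (3%:R * a * b ^+ 2))
        (a ^+ 2 * d + 2%:R * a * b * c + v * (b ^+ 2 * c + 2%:R * a * b * d))
        (b * c ^+ 2 + 2%:R * a * c * d + v * (a * d ^+ 2 + 2%:R * b * c * d))
        (3%:R * c ^+ 2 * d + v * (3%:R * c * d ^+ 2))).
Proof.
rewrite /Lline Cpt0 Lpt0v line_image_lt !mul_rv4 /GqMx /mx4 !mxE /=.
by congr line_through; apply: rv4_eq; ring.
Qed.

Lemma img (F : fieldType) (h2 : 2%:R = 0 :> F) (a b c d v : F) :
  a * d - b * c != 0 ->
  line_image (Lline (Some 0) v) (GqMx a b c d) =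
  if d == 0 then Lline None (v * b / c)
  else Lline (Some (b / d)) (v * d ^+ 2 / (a * d - b * c)).
Proof.
move=> hD; rewrite img_vecs; case: eqVneq => [d0 | d0].
- subst d.
  move: hD; rewrite mulr0 sub0r oppr_eq0 mulf_eq0 negb_or => /andP [hb hc].
  rewrite /Lline LptN /=.
  apply: (@lt_chg _ _ _ _ _ (b ^+ 3) 0 (3%:R * a ^+ 2 * b + v * (3%:R * a * b ^+ 2))
            (b * c ^+ 2)).
  + by rewrite rv4_comb; apply: rv4_eq; ring.
  + rewrite rv4_comb; apply: rv4_eq; try ring.
    by apply: (c2_eq h2 (z := a * b * c)); field.
  + by rewrite mul0r subr0; apply: mulf_neq0; rewrite ?expf_neq0 // mulf_neq0 // expf_neq0.
- set t := b / d; have hb : b = t * d by rewrite /t divfK.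
  clearbody t; subst b.
  have he : a - t * c != 0.
    apply: contra hD => /eqP he.
    have -> : a * d - t * d * c = d * (a - t * c) by ring.
    by rewrite he mulr0.
  rewrite /Lline LptS.
  apply: (@lt_chg _ _ _ _ _ (d ^+ 3) 0 (3%:R * c ^+ 2 * d + v * (3%:R * c * d ^+ 2))
            (d * (a - t * c) ^+ 2)).
  + by rewrite /= rv4_comb; apply: rv4_eq; ring.
  + rewrite /= rv4_comb; apply: rv4_eq.
    * apply: (c2_eq h2 (z := 3%:R * a * c * d * t ^+ 2 - 3%:R * c ^+ 2 * d * t ^+ 3)).
      by field.
    * apply: (c2_eq h2 (z := 2%:R * a * c * d * t - 2%:R * c ^+ 2 * d * t ^+ 2)).
      by field.
    * apply: (c2_eq h2 (z := a * c * d - c ^+ 2 * d * t)).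
      by field.
    * by ring.
  + by rewrite mul0r subr0; apply: mulf_neq0; rewrite ?expf_neq0 // mulf_neq0 // expf_neq0.
Qed.


Lemma Gq_mxP (F : finFieldType) (M : 'M[F]_4) :
  reflect (exists a b c d, a * d - b * c != 0 /\ M = GqMx a b c d) (M \in Gq_mx F).
Proof.
rewrite inE; apply: (iffP idP).
- by case/existsP => a /existsP [b /existsP [c /existsP [d /andP [hD /eqP ->]]]];
  exists a, b, c, d.
- case=> a [b [c [d [hD ->]]]].
  by apply/existsP; exists a; apply/existsP; exists b; apply/existsP; exists c;
     apply/existsP; exists d; rewrite hD eqxx.
Qed.

Lemma Gq_mem (F : finFieldType) (a b c d : F) :
  a * d - b * c != 0 -> GqMx a b c d \in Gq_mx F.
Proof. by move=> hD; apply/Gq_mxP; exists a, b, c, d. Qed.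

Lemma orbit1 (F : finFieldType) (h2 : 2%:R = 0 :> F) :
  line_orbit (Lline (Some (0 : F)) 0) = (fun o => Lline o 0) @: [set: option F].
Proof.
apply/setP => U; apply/imsetP/imsetP.
- case=> M /Gq_mxP [a [b [c [d [hD ->]]]]] ->.
  rewrite img //; case: eqVneq => _; rewrite !mul0r.
  + by exists None.
  + by exists (Some (b / d)).
- case=> [[t|]] _ ->.
  + exists (GqMx 1 t 0 1); first by apply: Gq_mem; simp0; rewrite oner_eq0.
    by rewrite img ?oner_eq0 /=; simp0; rewrite ?oner_eq0 ?divr1 ?mul0r.
  + exists (GqMx 0 1 1 0); first by apply: Gq_mem; simp0; rewrite oppr_eq0 oner_eq0.
    by rewrite img ?eqxx /=; simp0; rewrite ?oppr_eq0 ?oner_eq0 ?mul0r.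
Qed.

Lemma orbit2 (F : finFieldType) (h2 : 2%:R = 0 :> F) :
  line_orbit (Lline (Some (0 : F)) 1) =
  (fun p => Lline p.1 p.2) @: setX [set: option F] [set~ (0 : F)].
Proof.
apply/setP => U; apply/imsetP/imsetP.
- case=> M /Gq_mxP [a [b [c [d [hD ->]]]]] ->.
  rewrite img //; case: eqVneq => d0.
  + subst d; move: hD; rewrite mulr0 sub0r oppr_eq0 mulf_eq0 negb_or => /andP [hb hc].
    exists (None, 1 * b / c) => //.
    by rewrite in_setX in_setT in_setC1 /= mul1r mulf_neq0 ?invr_neq0.
  + exists (Some (b / d), 1 * d ^+ 2 / (a * d - b * c)) => //.
    by rewrite in_setX in_setT in_setC1 /= mul1r mulf_neq0 ?invr_neq0 ?expf_neq0.
- case=> [[[t|] w]]; rewrite in_setX in_setT in_setC1 /= => hw ->.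
  + exists (GqMx w^-1 t 0 1); first by apply: Gq_mem; simp0; rewrite invr_neq0.
    rewrite img ?oner_eq0 /=; simp0; rewrite ?invr_neq0 // ?divr1.
    by congr Lline; rewrite expr1n invrK mul1r.
  + exists (GqMx 0 w 1 0); first by apply: Gq_mem; simp0; rewrite oppr_eq0.
    by rewrite img ?eqxx /=; simp0; rewrite ?oppr_eq0 // divr1.
Qed.

Lemma UG_eq (F : finFieldType) (h2 : 2%:R = 0 :> F) :
  UGamma_lines F = line_orbit (Lline (Some (0 : F)) 0) :|: line_orbit (Lline (Some (0 : F)) 1).
Proof.
rewrite orbit1 // orbit2 //; apply/setP => U; rewrite !inE; apply/idP/idP.
- move/UG_iff => [o [v ->]]; case: (eqVneq v 0) => [-> | v0].
  + by apply/orP; left; apply/imsetP; exists o.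
  + apply/orP; right; apply/imsetP; exists (o, v) => //.
    by rewrite in_setX in_setT in_setC1.
- case/orP => [/imsetP [o _ ->] | /imsetP [[o w] _ ->]]; apply/UG_iff; by exists o; eexists.
Qed.

Lemma orbits_disj (F : finFieldType) (h2 : 2%:R = 0 :> F) :
  [disjoint line_orbit (Lline (Some (0 : F)) 0) & line_orbit (Lline (Some (0 : F)) 1)].
Proof.
rewrite orbit1 // orbit2 // disjoint_subset; apply/subsetP => U /imsetP [o _ ->].
rewrite inE; apply/negP; case/imsetP => [[o' w]]; rewrite in_setX in_setC1 /= => /andP [_ hw] /Lline_inj [_ e].
by rewrite -e eqxx in hw.
Qed.

Lemma card_orbit1 (F : finFieldType) (h2 : 2%:R = 0 :> F) :
  #|line_orbit (Lline (Some (0 : F)) 0)| = #|F|.+1.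
Proof.
rewrite orbit1 // card_imset; first by rewrite cardsT card_option.
by move=> o o' /Lline_inj [].
Qed.

Lemma card_orbit2 (F : finFieldType) (h2 : 2%:R = 0 :> F) :
  #|line_orbit (Lline (Some (0 : F)) 1)| = (#|F| ^ 2 - 1)%N.
Proof.
rewrite orbit2 // card_imset; last by move=> [o v] [o' v'] /Lline_inj [/= -> ->].
rewrite cardsX cardsT card_option cardsC1.
have : (0 < #|F|)%N by apply/card_gt0P; exists 0.
by case: #|F| => // n _; rewrite /=; lia.
Qed.

Lemma compl_eq (F : finFieldType) (h2 : 2%:R = 0 :> F) :
  line_orbit (Lline (Some (0 : F)) 0) = compl_regulus F.
Proof.
rewrite orbit1 //; apply/setP => U; rewrite [in RHS]inE; apply/imsetP/idP.
- by case=> o _ ->; apply/(compl_iff h2); exists o.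
- by move/(compl_iff h2) => [o ->]; exists o.
Qed.


Lemma pc_memP (F : finFieldType) (M N : 'M[F]_4) :
  reflect (exists k, k != 0 /\ N = k *: M) (N \in projclass M).
Proof.
apply: (iffP imsetP).
- by case=> k; rewrite inE => hk ->; exists k.
- by case=> k [hk ->]; exists k; rewrite ?inE.
Qed.

Lemma pc_mem (F : finFieldType) (M : 'M[F]_4) : M \in projclass M.
Proof. by apply/pc_memP; exists 1; rewrite oner_eq0 scale1r. Qed.

Lemma pc_scale (F : finFieldType) (k : F) (M : 'M[F]_4) :
  k != 0 -> projclass (k *: M) = projclass M.
Proof.
move=> hk; apply/setP => N; apply/pc_memP/pc_memP => [[k' [hk' ->]] | [k' [hk' ->]]].
- by exists (k' * k); rewrite scalerA mulf_neq0.
- exists (k' / k); rewrite scalerA mulf_neq0 ?invr_neq0 //; split => //.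
  by rewrite divfK.
Qed.

Lemma line_image_scale (F : fieldType) (U M : 'M[F]_4) (k : F) :
  k != 0 -> line_image U (k *: M) = line_image U M.
Proof.
by move=> hk; rewrite /line_image -scalemxAr; apply: eq_genmx; apply: eqmx_scale.
Qed.

Lemma stabMx_Gq (F : fieldType) (h2 : 2%:R = 0 :> F) (c d : F) :
  stabMx c d = GqMx 1 0 c d.
Proof.
apply/matrixP => i j; rewrite /stabMx /GqMx /mx4 !mxE.
case: i => [[|[|[|[|i]]]] Hi]; case: j => [[|[|[|[|j]]]] Hj] //=;
  rewrite ?(n3 h2) ?h2; ring.
Qed.

Lemma GqMx_a0 (F : fieldType) (h2 : 2%:R = 0 :> F) (a c d : F) :
  a != 0 -> GqMx a 0 c d = a ^+ 3 *: stabMx (c / a) (d / a).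
Proof.
move=> ha; apply/matrixP => i j; rewrite /stabMx /GqMx /mx4 !mxE.
case: i => [[|[|[|[|i]]]] Hi]; case: j => [[|[|[|[|j]]]] Hj] //=;
  by rewrite ?(n3 h2) ?h2; field.
Qed.

Lemma stab1 (F : finFieldType) (h2 : 2%:R = 0 :> F) :
  line_stab (Lline (Some (0 : F)) 0) =
  (fun p => projclass (stabMx p.1 p.2)) @: setX [set: F] [set~ (0 : F)].
Proof.
apply/setP => g; apply/idP/idP.
- rewrite inE => /andP [/imsetP [M /Gq_mxP [a [b [c [d [hD eM]]]]] eg] /forallP hall].
  subst g M.
  have := hall (GqMx a b c d); rewrite pc_mem /= => /eqP; rewrite img //.
  case: eqVneq => d0 e.
  + by case: (Lline_inj e).
  + case: (Lline_inj e) => [[bd] _].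
    have b0 : b = 0.
      by move/eqP: bd; rewrite mulf_eq0 invr_eq0 (negbTE d0) orbF => /eqP.
    subst b; move: hD; rewrite mul0r subr0 mulf_eq0 negb_or => /andP [ha _].
    rewrite (GqMx_a0 h2) // pc_scale ?expf_neq0 //.
    apply/imsetP; exists (c / a, d / a) => //.
    by rewrite in_setX in_setT in_setC1 /= mulf_neq0 ?invr_neq0.
- case/imsetP => [[c d]]; rewrite in_setX in_setC1 /= => /andP [_ hd] ->.
  rewrite inE; apply/andP; split.
  + apply/imsetP; exists (stabMx c d) => //.
    by rewrite (stabMx_Gq h2); apply: Gq_mem; simp0.
  + apply/forallP => M; apply/implyP => /pc_memP [k [hk ->]].
    rewrite line_image_scale // (stabMx_Gq h2) img; simp0 => //.
    by rewrite (negbTE hd).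
Qed.

Lemma stab2 (F : finFieldType) (h2 : 2%:R = 0 :> F) :
  line_stab (Lline (Some (0 : F)) 1) =
  (fun c => projclass (stabMx c 1)) @: [set: F].
Proof.
apply/setP => g; apply/idP/idP.
- rewrite inE => /andP [/imsetP [M /Gq_mxP [a [b [c [d [hD eM]]]]] eg] /forallP hall].
  subst g M.
  have := hall (GqMx a b c d); rewrite pc_mem /= => /eqP; rewrite img //.
  case: eqVneq => d0 e.
  + by case: (Lline_inj e).
  + case: (Lline_inj e) => [[bd] w1].
    have b0 : b = 0.
      by move/eqP: bd; rewrite mulf_eq0 invr_eq0 (negbTE d0) orbF => /eqP.
    subst b; have hD' := hD; move: hD'; rewrite mul0r subr0 mulf_eq0 negb_or => /andP [ha _].
    have da : d / a = 1 by rewrite -w1; field; rewrite d0 ha.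
    rewrite (GqMx_a0 h2) // pc_scale ?expf_neq0 // da.
    by apply/imsetP; exists (c / a).
- case/imsetP => c _ ->.
  rewrite inE; apply/andP; split.
  + apply/imsetP; exists (stabMx c 1) => //.
    by rewrite (stabMx_Gq h2); apply: Gq_mem; simp0; rewrite oner_eq0.
  + apply/forallP => M; apply/implyP => /pc_memP [k [hk ->]].
    rewrite line_image_scale // (stabMx_Gq h2) img; simp0; rewrite ?oner_eq0 //.
    by rewrite expr1n divr1.
Qed.

Lemma pc_inj (F : finFieldType) (c d c' d' : F) :
  projclass (stabMx c d) = projclass (stabMx c' d') -> c = c' /\ d = d'.
Proof.
move=> e; have : stabMx c d \in projclass (stabMx c' d') by rewrite -e pc_mem.
case/pc_memP => k [hk E].
have E00 := congr1 (fun M : 'M[F]_4 => M i0 i0) E.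
have E01 := congr1 (fun M : 'M[F]_4 => M i0 i1) E.
have E11 := congr1 (fun M : 'M[F]_4 => M i1 i1) E.
move: E00 E01 E11; rewrite /stabMx /mx4 !mxE /= mulr1 => k1; rewrite -k1 !mul1r.
by [].
Qed.

Lemma card_stab1 (F : finFieldType) (h2 : 2%:R = 0 :> F) :
  #|line_stab (Lline (Some (0 : F)) 0)| = (#|F| * (#|F| - 1))%N.
Proof.
rewrite stab1 // card_imset; last by move=> [c d] [c' d'] /pc_inj [/= -> ->].
by rewrite cardsX cardsT cardsC1 subn1.
Qed.

Lemma card_stab2 (F : finFieldType) (h2 : 2%:R = 0 :> F) :
  #|line_stab (Lline (Some (0 : F)) 1)| = #|F|.
Proof.
rewrite stab2 // card_imset; last by move=> c c' /pc_inj [].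
by rewrite cardsT.
Qed.

Theorem theorem6p3 (F : finFieldType) :
  ~~ odd #|F| -> (8 <= #|F|)%N ->
  let q := #|F| in
  let P0 := rv4 (0 : F) 0 0 1 in
  let l1 := line_through P0 (rv4 0 1 0 0) in
  let l2 := line_through P0 (rv4 0 1 1 0) in
  [/\ UGamma_lines F = line_orbit l1 :|: line_orbit l2,
      [disjoint line_orbit l1 & line_orbit l2],
      #|line_orbit l1| = q.+1,
      #|line_orbit l2| = (q ^ 2 - 1)%N &
      line_orbit l1 = compl_regulus F] /\
  [/\ #|line_stab l1| = (q * (q - 1))%N,
      (forall g, g \in line_stab l1 ->
         exists c d : F, d != 0 /\ stabMx c d \in g),
      #|line_stab l2| = q &
      (forall g, g \in line_stab l2 -> exists c : F, stabMx c 1 \in g)].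
Proof.
move=> hodd _ q P0 l1 l2.
have h2 := char2_of hodd.
have l1E : l1 = Lline (Some (0:F)) 0 by rewrite /l1 /P0 /Lline Cpt0 Lpt0v.
have l2E : l2 = Lline (Some (0:F)) 1 by rewrite /l2 /P0 /Lline Cpt0 Lpt0v.
rewrite l1E l2E /q.
split; split.
- exact: UG_eq.
- exact: orbits_disj.
- exact: card_orbit1.
- exact: card_orbit2.
- exact: compl_eq.
- exact: card_stab1.
- move=> g; rewrite stab1 // => /imsetP [[c d]].
  rewrite in_setX in_setC1 /= => /andP [_ hd] ->.
  by exists c, d; split => //; apply: pc_mem.
- exact: card_stab2.
- move=> g; rewrite stab2 // => /imsetP [c _ ->]; exists c; exact: pc_mem.
Qed.
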